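(* Let $X\subseteq\mathbb{C}^n$ be a complex analytic variety with coordinates $z_1,\dots,z_n$, $x\in X$, $M$ an $\mathcal{O}_{X,x}$-submodule of $\mathcal{O}_{X,x}^p$ with matrix of generators $[M]$, and $k\in\mathbb{N}$. Then $(z_{t_1}-z'_{t_1})\cdots(z_{t_k}-z'_{t_k})\det(M_{IJ})\det(M'_{KL})\in I_{2k}(M_D)$ at $(x,x)$ for all $t_1,\dots,t_k\in\{1,\dots,n\}$ and all $k$-indexes $I,J,K,L$.
   Context: $\pi_1,\pi_2:X\times X\to X$ are projections. For an object $A$ on $X$, $A$ also denotes $A\circ\pi_1$ and $A'$ denotes $A\circ\pi_2$; so $z_i-z_i'=z_i\circ\pi_1-z_i\circ\pi_2$. For $k$-indexes $I,J$, $M_{IJ}$ is the $k\times k$ submatrix of $[M]$ with rows $I$ and columns $J$ (composed with $\pi_1$), and $M'_{KL}$ the submatrix with rows $K$, columns $L$ composed with $\pi_2$. $M_D$ is the submodule of $\mathcal{O}_{X\times X,(x,x)}^{2p}$ generated by $h_D=(h\circ\pi_1,h\circ\pi_2)$, $h\in M$, and $I_{2k}(M_D)$ is the ideal of its $2k\times 2k$ minors. *)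

(* Defs.v *)
(* Abstract algebraic rendering of the local rings of germs:
   A  plays O_{X,x},  B plays O_{X x X,(x,x)},
   f1, f2 : A -> B are the pullbacks along the projections pi_1, pi_2. *)
From mathcomp Require Import all_boot all_order all_algebra.
Set Implicit Arguments. Unset Strict Implicit. Unset Printing Implicit Defensive.
Import GRing.Theory.
Local Open Scope ring_scope.

Definition kindex (k p : nat) (I : 'I_k -> 'I_p) : Prop :=
  forall a b : 'I_k, (a < b)%N -> (I a < I b)%N.

Definition subM (R : Type) (p m k : nat) (G : 'M[R]_(p, m))
  (I : 'I_k -> 'I_p) (J : 'I_k -> 'I_m) : 'M[R]_k :=
  \matrix_(a < k, b < k) G (I a) (J b).

Definition inM (A : comNzRingType) (p m : nat) (G : 'M[A]_(p, m)) (h : 'cV[A]_p)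
  : Prop := exists c : 'cV[A]_m, h = G *m c.

Definition hD (A B : comNzRingType) (f1 f2 : {rmorphism A -> B}) (p : nat)
  (h : 'cV[A]_p) : 'cV[B]_(p + p) :=
  col_mx (map_mx f1 h) (map_mx f2 h).

(* A 2k x 2k minor of the generating matrix of M_D, whose columns are the
   h_D, h in M: pick 2k generators and a 2k-index of rows. *)
Definition minorMD (A B : comNzRingType) (f1 f2 : {rmorphism A -> B})
  (p m : nat) (G : 'M[A]_(p, m)) (k : nat) (y : B) : Prop :=
  exists (Rw : 'I_(k + k) -> 'I_(p + p)) (H : 'I_(k + k) -> 'cV[A]_p),
    kindex Rw /\ (forall j, inM G (H j)) /\
    y = \det (\matrix_(a < k + k, b < k + k) hD f1 f2 (H b) (Rw a) ord0).

Definition in_I2k (A B : comNzRingType) (f1 f2 : {rmorphism A -> B})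
  (p m : nat) (G : 'M[A]_(p, m)) (k : nat) (y : B) : Prop :=
  exists (N : nat) (r mn : 'I_N -> B),
    (forall i, minorMD f1 f2 G k (mn i)) /\ y = \sum_(i < N) r i * mn i.

(* Main.v *)
Set Implicit Arguments. Unset Strict Implicit.
Require Import Defs.
From mathcomp Require Import all_boot all_order all_algebra.
From mathcomp Require Import ring zify.
Import GRing.Theory.
Local Open Scope ring_scope.
Set Warnings "-notation-overridden -ambiguous-paths".

Lemma split_l m n (i : 'I_m) : split (lshift n i) = inl i.
Proof. exact: (unsplitK (inl i : 'I_m + 'I_n)). Qed.
Lemma split_r m n (i : 'I_n) : split (rshift m i) = inr i.
Proof. exact: (unsplitK (inr i : 'I_m + 'I_n)). Qed.
Lemma ordsplit m n (b : 'I_(m + n)) :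
  (exists i, b = lshift n i) \/ (exists i, b = rshift m i).
Proof. rewrite -(splitK b); case: split => i; [left|right]; exists i => //. Qed.

Section Ideal.
Variables (A B : comNzRingType) (f1 f2 : {rmorphism A -> B}) (p m : nat)
  (G : 'M[A]_(p, m)) (k : nat).

Lemma I2k_minor y : minorMD f1 f2 G k y -> in_I2k f1 f2 G k y.
Proof.
move=> h; exists 1%N, (fun _ => 1), (fun _ => y); split => //.
by rewrite big_ord1 mul1r.
Qed.

Lemma I2k_sub x y : in_I2k f1 f2 G k x -> in_I2k f1 f2 G k y ->
  in_I2k f1 f2 G k (x - y).
Proof.
move=> [N1 [r1 [m1 [h1 ->]]]] [N2 [r2 [m2 [h2 ->]]]].
exists (N1 + N2)%N,
  (fun i => match split i with inl i => r1 i | inr j => - r2 j end),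
  (fun i => match split i with inl i => m1 i | inr j => m2 j end); split.
  by move=> i; case: split.
rewrite big_split_ord /=.
congr (_ + _); first by apply: eq_bigr => i _; rewrite -[lshift _ _]/(unsplit (inl _)) unsplitK.
rewrite -sumrN; apply: eq_bigr => i _; rewrite -[rshift _ _]/(unsplit (inr _)) unsplitK mulNr //.
Qed.

Lemma I2k_mul c x : in_I2k f1 f2 G k x -> in_I2k f1 f2 G k (c * x).
Proof.
move=> [N [r [mn [h ->]]]]; exists N, (fun i => c * r i), mn; split => //.
by rewrite mulr_sumr; apply: eq_bigr => i _; rewrite mulrA.
Qed.

Lemma I2k_add x y : in_I2k f1 f2 G k x -> in_I2k f1 f2 G k y ->
  in_I2k f1 f2 G k (x + y).
Proof.
move=> hx hy; have := I2k_sub hx (I2k_mul (-1) hy).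
by rewrite mulN1r opprK.
Qed.

Definition NM (Rw : 'I_(k + k) -> 'I_(p + p)) (C : 'I_(k + k) -> 'cV[B]_(p + p))
  : 'M[B]_(k + k) := \matrix_(b, a) C b (Rw a) ord0.

Lemma NM_lin Rw (C1 C2 C3 : 'I_(k + k) -> 'cV[B]_(p + p)) j x y :
  C1 j = x *: C2 j + y *: C3 j ->
  (forall b, b != j -> C2 b = C1 b) -> (forall b, b != j -> C3 b = C1 b) ->
  \det (NM Rw C1) = x * \det (NM Rw C2) + y * \det (NM Rw C3).
Proof.
move=> hj h2 h3; apply: (@determinant_multilinear _ _ _ _ _ j).
- by apply/rowP => a; rewrite /NM !mxE hj !mxE.
- by apply/matrixP => a b; rewrite /NM !mxE h2 // eq_sym neq_lift.
- by apply/matrixP => a b; rewrite /NM !mxE h3 // eq_sym neq_lift.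
Qed.



Definition EE (s : nat) (H : 'I_(k + k) -> 'cV[A]_p) (b : 'I_(k + k))
  : 'cV[B]_(p + p) :=
  if (b < s)%N then col_mx (map_mx f1 (H b)) 0 else hD f1 f2 (H b).

Lemma ind (w : 'I_k -> A) (Rw : 'I_(k + k) -> 'I_(p + p)) (hRw : kindex Rw)
  s : (s <= k)%N -> forall H, (forall b, inM G (H b)) ->
  in_I2k f1 f2 G k (\prod_(i < k | (i < s)%N) (f1 (w i) - f2 (w i))
     * \det (NM Rw (EE s H))).
Proof.
elim: s => [|s IH] hs H hH.
  rewrite big_pred0 // mul1r; apply: I2k_minor.
  exists Rw, H; split => //; split => //.
  rewrite -det_tr; congr (\det _); apply/matrixP => a b.
  by rewrite /NM !mxE /EE.
have hs' : (s < k)%N by [].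
set i0 := Ordinal hs'.
set j : 'I_(k + k) := lshift k i0.
set H' := fun b => if b == j then w i0 *: H b else H b.
have hH' : forall b, inM G (H' b).
  move=> b; rewrite /H'; case: eqP => _; last exact: hH.
  by case: (hH b) => c ->; exists (w i0 *: c); rewrite scalemxAr.
have lin : \det (NM Rw (EE s H')) = f2 (w i0) * \det (NM Rw (EE s H))
   + (f1 (w i0) - f2 (w i0)) * \det (NM Rw (EE s.+1 H)).
  apply: (@NM_lin _ _ _ _ j).
  rewrite /EE /H' eqxx /= ltnn ltnSn.
    apply/colP => a; rewrite /hD !mxE.
    case: (split a) => a'; rewrite !mxE ?rmorphM /=.
    1,2: ring.
  move=> b hb; rewrite /EE /H'; have -> : (b == j) = false by apply/negbTE.
  by [].
  move=> b hb; rewrite /EE ltnS leq_eqVlt.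
    have -> : (val b == s) = false.
      by apply/negbTE; apply: contra hb => /eqP hb; apply/eqP/val_inj.
    by rewrite /H'; have -> : (b == j) = false by apply/negbTE.
have := I2k_sub (IH (ltnW hs) H' hH') (I2k_mul (f2 (w i0)) (IH (ltnW hs) H hH)).
have -> : \prod_(i < k | (i < s.+1)%N) (f1 (w i) - f2 (w i)) =
   (f1 (w i0) - f2 (w i0)) * \prod_(i < k | (i < s)%N) (f1 (w i) - f2 (w i)).
  rewrite (bigD1 i0) //=; congr (_ * _); apply: eq_bigl => i.
  rewrite ltnS leq_eqVlt; case: ltngtP => //= h.
  by apply/eqP => e; move: h; rewrite e ltnn.
  by apply/negbTE; rewrite negbK; apply/eqP/val_inj.
rewrite lin; congr in_I2k; ring.
Qed.



End Ideal.
Theorem lemma3p2 (A B : comNzRingType) (f1 f2 : {rmorphism A -> B})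
  (n : nat) (z : 'I_n -> A) (p m : nat) (G : 'M[A]_(p, m)) (k : nat)
  (t : 'I_k -> 'I_n) (I : 'I_k -> 'I_p) (J : 'I_k -> 'I_m)
  (K : 'I_k -> 'I_p) (L : 'I_k -> 'I_m) :
  kindex I -> kindex J -> kindex K -> kindex L ->
  in_I2k f1 f2 G k
    ((\prod_(i < k) (f1 (z (t i)) - f2 (z (t i))))
       * \det (map_mx f1 (subM G I J)) * \det (map_mx f2 (subM G K L))).
Proof.
move=> hI _ hK _.
pose Rw (a : 'I_(k + k)) : 'I_(p + p) :=
  match split a with inl i => lshift p (I i) | inr i => rshift p (K i) end.
have hRw : kindex Rw.
  move=> a b; case: (ordsplit a) => -[i ->]; case: (ordsplit b) => -[i' ->];
    rewrite /Rw !(split_l, split_r) /=.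
  exact: hI.
  by move=> _; apply: ltn_addr.
  by move=> h; have := ltn_ord i'; lia.
  by rewrite !ltn_add2l; apply: hK.
pose H (b : 'I_(k + k)) : 'cV[A]_p :=
  match split b with inl i => col (J i) G | inr i => col (L i) G end.
have hH : forall b, inM G (H b).
  move=> b; rewrite /H; case: split => i.
    by exists (delta_mx (J i) 0); rewrite -colE.
  by exists (delta_mx (L i) 0); rewrite -colE.
have := ind f1 f2 (fun i => z (t i)) hRw (leqnn k) hH.
rewrite (eq_bigl xpredT); last by move=> i; rewrite ltn_ord.
have -> : NM Rw (EE f1 f2 k H) = block_mx
   (map_mx f1 (subM G I J))^T 0 (map_mx f1 (subM G I L))^T (map_mx f2 (subM G K L))^T.
  apply/matrixP => b a; rewrite /NM mxE.
  case: (ordsplit b) => -[i ->]; case: (ordsplit a) => -[a' ->].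
  all: rewrite /EE /H /Rw /hD ?split_l ?split_r ?split_l ?split_r ?block_mxEul ?block_mxEur ?block_mxEdl ?block_mxEdr.
  all: rewrite /= ?ltn_ord ?(ltnNge, leq_addr) /=.
  1,2,3,4: by rewrite ?col_mxEu ?col_mxEd !mxE.
by rewrite det_lblock !det_tr mulrA.
Qed.
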